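(* Let $1\le m\le k-1$, $K=\{1,\dots,k\}$, $T\subseteq K$ with $|T|=m$, and let $\mathcal{V}=\{\bm v_1,\dots,\bm v_{m-1}\}$ be $m-1$ distinct points of $PG(k-1,q)$ with $\mathrm{supp}(\bm v_i)\cap T=\emptyset$ for all $i$. If $m\le q^{k-m-1}$, then $M=X^T\cup Y^T_{\mathcal V}\cup Z^T$ is a minimal $(k-m)$-block over $\mathbb{F}_q$.
   Context: Points of $PG(k-1,q)$ are one-dimensional subspaces of $\mathbb{F}_q^k$, identified with any nonzero representing vector; the support $\mathrm{supp}(\bm x)=\{i:x_i\neq0\}$ of a point is well defined. $\bm e_i$ denotes the $i$-th standard unit vector of $\mathbb{F}_q^k$. Define $X^T=\{\bm x\in PG(k-1,q): \mathrm{supp}(\bm x)\cap T=\emptyset\}$; $Y^T_{\mathcal V}=\{\bm x\in PG(k-1,q): |\mathrm{supp}(\bm x)\cap T|=1\}$ minus all points represented by $\bm v_i+\lambda\bm e_j$ with $\bm v_i\in\mathcal V$, $j\in T$, $\lambda\in\mathbb{F}_q\setminus\{0\}$; $Z^T=\{\bm x\in PG(k-1,q): \mathrm{supp}(\bm x)\text{ is a 2-element subset of }T\}$. For $1\le r\le k-1$, a set $M$ of points of $PG(k-1,q)$ is an $r$-block if every $(k-r)$-dimensional linear subspace of $\mathbb{F}_q^k$ contains at least one point of $M$. A tangent of a point $\bm x\in M$ is a $(k-r)$-dimensional linear subspace $U$ of $\mathbb{F}_q^k$ whose set of points meets $M$ exactly in $\{\bm x\}$. An $r$-block $M$ is minimal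 if every point of $M$ has a tangent. *)

(* Defs.v *)
From HB Require Import structures.
From mathcomp Require Import all_boot all_order all_algebra all_fingroup all_field.
Set Implicit Arguments. Unset Strict Implicit. Unset Printing Implicit Defensive.
Import GRing.Theory.
Local Open Scope ring_scope.

(* Points of PG(k-1,q), q = #|F|: one-dimensional subspaces of F^k, represented
   canonically (via genmx) as square matrices whose row space is the line. *)
Section PG.
Variables (F : finFieldType) (k : nat).

Definition pt_of (v : 'rV[F]_k) : 'M[F]_k := (<<v>>)%MS.

Definition PG : {set 'M[F]_k} := [set pt_of v | v in [pred v : 'rV[F]_k | v != 0]].

Definition supp (v : 'rV[F]_k) : {set 'I_k} := [set i | v 0 i != 0].

Definition e_ (j : 'I_k) : 'rV[F]_k := delta_mx 0 j.

Definition X_T (T : {set 'I_k}) : {set 'M[F]_k} :=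
  [set pt_of v | v in [pred v : 'rV[F]_k | (v != 0) && [disjoint supp v & T]]].

(* V given by representing vectors vs *)
Definition Y_T (T : {set 'I_k}) (vs : seq 'rV[F]_k) : {set 'M[F]_k} :=
  [set pt_of v | v in [pred v : 'rV[F]_k | (v != 0) && (#|supp v :&: T| == 1)%N]]
  :\: [set P in PG | [exists v in [pred v | v \in vs], exists j in T,
          exists l : F, (l != 0) && (P == pt_of (v + l *: e_ j))]].

Definition Z_T (T : {set 'I_k}) : {set 'M[F]_k} :=
  [set pt_of v | v in [pred v : 'rV[F]_k |
      (v != 0) && (supp v \subset T) && (#|supp v| == 2)%N]].

Definition pts_in (U : 'M[F]_k) : {set 'M[F]_k} := [set P in PG | (P <= U)%MS].

Definition is_block (r : nat) (M : {set 'M[F]_k}) : Prop :=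
  forall U : 'M[F]_k, \rank U = (k - r)%N -> exists2 P, P \in M & (P <= U)%MS.

Definition is_tangent (r : nat) (M : {set 'M[F]_k}) (x U : 'M[F]_k) : Prop :=
  \rank U = (k - r)%N /\ pts_in U :&: M = [set x].

Definition is_minimal_block (r : nat) (M : {set 'M[F]_k}) : Prop :=
  M \subset PG /\ is_block r M /\
  forall x, x \in M -> exists U : 'M[F]_k, is_tangent r M x U.

End PG.

(* Main.v *)
Require Import Defs.
From HB Require Import structures.
From mathcomp Require Import all_boot all_order all_algebra all_fingroup all_field.
From mathcomp Require Import ring zify.
Set Implicit Arguments. Unset Strict Implicit. Unset Printing Implicit Defensive.
Import GRing.Theory.
Local Open Scope ring_scope.

Section Basics.
Variables (F : finFieldType) (k : nat).
Implicit Types (v w : 'rV[F]_k) (T : {set 'I_k}).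

Lemma eE (j i : 'I_k) : (e_ F j : 'rV[F]_k) 0 i = (i == j)%:R.
Proof. by rewrite /e_ mxE eqxx. Qed.

Lemma pt_eqP v w : reflect (pt_of v = pt_of w) (v == w)%MS.
Proof. exact: genmxP. Qed.

Lemma pt_eq_scale v w : pt_of v = pt_of w -> exists c, v = c *: w.
Proof. by move/pt_eqP/andP=> [/sub_rVP H _]. Qed.

Lemma pt_scale c w : c != 0 -> pt_of (c *: w) = pt_of w.
Proof. by move=> c0; apply/pt_eqP; apply/eqmxP; apply: eqmx_scale. Qed.

Lemma supp_scale c w : c != 0 -> supp (c *: w) = supp w.
Proof. by move=> c0; apply/setP=> i; rewrite !inE mxE mulf_eq0 negb_or c0. Qed.

Lemma pt_sub w m (U : 'M[F]_(m, k)) : (pt_of w <= U)%MS = (w <= U)%MS.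
Proof. by rewrite /pt_of genmxE. Qed.

Lemma inPG v : v != 0 -> pt_of v \in PG F k.
Proof. by move=> v0; apply/imsetP; exists v. Qed.

Lemma PGP P : P \in PG F k -> exists2 v, v != 0 & P = pt_of v.
Proof. by case/imsetP=> v /= v0 ->; exists v. Qed.

Lemma pt_eq_scaleN v w : v != 0 -> w != 0 -> pt_of v = pt_of w ->
  exists2 c, c != 0 & v = c *: w.
Proof.
move=> v0 w0 /pt_eq_scale [c vc]; exists c => //.
by apply: contraNneq v0 => c0; rewrite vc c0 scale0r.
Qed.

Lemma inX T w : w != 0 -> (pt_of w \in X_T F T) = [disjoint supp w & T].
Proof.
move=> w0; apply/imsetP/idP => [[v /= /andP [v0 dv] E]|dw].
  by have [c c0 ->] := pt_eq_scaleN w0 v0 E; rewrite supp_scale.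
by exists w => //; rewrite unfold_in /= w0.
Qed.

Lemma inZ T w : w != 0 ->
  (pt_of w \in Z_T F T) = (supp w \subset T) && (#|supp w| == 2)%N.
Proof.
move=> w0; apply/imsetP/idP => [[v /= /andP [/andP [v0 dv] cv] E]|dw].
  by have [c c0 ->] := pt_eq_scaleN w0 v0 E; rewrite supp_scale // dv.
by exists w => //; rewrite unfold_in /= w0.
Qed.

Definition excl T (vs : seq 'rV[F]_k) (P : 'M[F]_k) :=
  [exists v in [pred v | v \in vs], exists j in T,
          exists l : F, (l != 0) && (P == pt_of (v + l *: e_ F j))].

Lemma inY T vs w : w != 0 ->
  (pt_of w \in Y_T T vs) = (#|supp w :&: T| == 1)%N && ~~ excl T vs (pt_of w).
Proof.
move=> w0; rewrite /Y_T inE inE inPG //= andbC; congr (_ && _).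
apply/imsetP/idP => [[v /= /andP [v0 dv] E]|dw].
  by have [c c0 ->] := pt_eq_scaleN w0 v0 E; rewrite supp_scale.
by exists w => //; rewrite unfold_in /= w0.
Qed.

Lemma exclI T vs v j l : v \in vs -> j \in T -> l != 0 ->
  excl T vs (pt_of (v + l *: e_ F j)).
Proof.
move=> vv jT l0; apply/existsP; exists v; rewrite inE vv /=.
by apply/existsP; exists j; rewrite jT; apply/existsP; exists l; rewrite l0 eqxx.
Qed.

Lemma exclE T vs P : excl T vs P ->
  exists v j l, [/\ v \in vs, j \in T, l != 0 & P = pt_of (v + l *: e_ F j)].
Proof.
case/existsP=> v /andP [vv /existsP [j /andP [jT /existsP [l /andP [l0 /eqP E]]]]].
by exists v, j, l.
Qed.

End Basics.

Lemma sum_delta (R : nzRingType) (I : finType) (f : I -> R) (a : I) :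
  \sum_i f i * (i == a)%:R = f a.
Proof.
rewrite (bigD1 a) //= eqxx mulr1 big1 ?addr0 // => i /negbTE ->.
by rewrite mulr0.
Qed.

Lemma pigeon (I : finType) (A : {set I}) n (R : I -> 'I_n -> bool) :
  (forall j, j \in A -> exists i, R j i) -> (n < #|A|)%N ->
  exists j j' i, [/\ j \in A, j' \in A, j != j', R j i & R j' i].
Proof.
move=> HR nA.
case: n R HR nA => [|n] R HR nA.
  have /set0Pn [j jA] : A != set0 by rewrite -card_gt0; apply: leq_ltn_trans nA.
  by have [[]] := HR j jA.
pose g j := odflt ord0 [pick i | R j i].
have gR j : j \in A -> R j (g j).
  by move=> jA; rewrite /g; case: pickP => [//|/= H]; have [i] := HR j jA; rewrite H.
case: (boolP [forall j in A, forall j' in A, (g j == g j') ==> (j == j')]) => Hi.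
  have inj : {in A &, injective g}.
    move=> j j' jA j'A E; move/forall_inP: Hi => /(_ j jA) /forall_inP /(_ j' j'A).
    by rewrite E eqxx => /eqP.
  have := max_card (mem (g @: A)); rewrite card_in_imset // card_ord.
  by rewrite leqNgt nA.
move: Hi; rewrite negb_forall_in => /existsP [j /andP [jA]].
rewrite negb_forall_in => /existsP [j' /andP [j'A]].
rewrite negb_imply => /andP [/eqP E ne].
by exists j, j', (g j); split => //; [apply: gR | rewrite E; apply: gR].
Qed.

Section Block.
Variables (F : finFieldType) (k : nat).
Implicit Types (v w : 'rV[F]_k) (T : {set 'I_k}).

Definition Cm (T : {set 'I_k}) : 'M[F]_(k, #|T|) :=
  \matrix_(i, l) (i == enum_val l)%:R.

Lemma colC T w l : (w *m Cm T) 0 l = w 0 (enum_val l).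
Proof. by rewrite mxE; under eq_bigr => i _ do rewrite mxE; rewrite sum_delta. Qed.

Lemma ex_kerT T (U : 'M[F]_k) : (\rank (U *m Cm T) < \rank U)%N ->
  exists2 w, w != 0 & (w <= U)%MS /\ [disjoint supp w & T].
Proof.
move=> lt; have := mxrank_mul_ker U (Cm T).
set K := (U :&: kermx (Cm T))%MS => E.
have : K != 0.
  rewrite -mxrank_eq0; apply: contraTneq lt => K0.
  by rewrite -E K0 addn0 ltnn.
case/rowV0Pn => w; rewrite sub_capmx => /andP [wU /sub_kermxP wC] w0.
exists w => //; split => //.
rewrite -setI_eq0; apply/eqP/setP => t; rewrite !inE; apply/negP => /andP [wt tT].
move/matrixP: wC => /(_ 0 (enum_rank_in tT t)).
by rewrite colC enum_rankK_in // mxE => /eqP; rewrite (negbTE wt).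
Qed.

Lemma ex_unitT T (U : 'M[F]_k) : \rank U = #|T| -> (\rank (U *m Cm T) = \rank U)%N ->
  forall j, j \in T -> exists2 z : 'rV[F]_k, (z <= U)%MS & forall t, t \in T -> z 0 t = (t == j)%:R.
Proof.
move=> rU E j jT.
have full : row_full (U *m Cm T) by rewrite /row_full E rU.
pose d := delta_mx 0 (enum_rank_in jT j) : 'rV[F]_#|T|. have /submxP [u du] : (d <= U *m Cm T)%MS by apply: submx_full.
exists (u *m U); first exact: submxMl.
move=> t tT.
move/matrixP: du => /(_ 0 (enum_rank_in jT t)).
rewrite mulmxA colC enum_rankK_in // mxE eqxx /= => <-.
congr (_%:R); case: (t =P j) => [->|ne]; first by rewrite eqxx.
case: eqP => // Ee; case: ne; move: Ee; apply: enum_rank_in_inj => //.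
Qed.


Lemma blockM T vs (U : 'M[F]_k) : (size vs < #|T|)%N ->
  (forall v, v \in vs -> [disjoint supp v & T]) -> \rank U = #|T| ->
  exists2 P, P \in X_T F T :|: Y_T T vs :|: Z_T F T & (P <= U)%MS.
Proof.
move=> sz dvs rU.
have rle := mxrankM_maxl U (Cm T).
case: (ltnP (\rank (U *m Cm T)) (\rank U)) => [lt | ge].
  have [w w0 [wU dw]] := ex_kerT lt.
  by exists (pt_of w); [rewrite !in_setU inX // dw | rewrite pt_sub].
have E : \rank (U *m Cm T) = \rank U by apply/eqP; rewrite eqn_leq rle ge.
case: (boolP [exists P, (P \in X_T F T :|: Y_T T vs :|: Z_T F T) && (P <= U)%MS]).
  by case/existsP => P /andP [PM PU]; exists P.
rewrite negb_exists => /forallP none; exfalso.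
have Hnot P : P \in X_T F T :|: Y_T T vs :|: Z_T F T -> (P <= U)%MS -> False.
  by move=> PM PU; have := none P; rewrite PM PU.
pose R j (i : 'I_(size vs)) :=
  [exists c : F, (c != 0) && ((c *: nth 0 vs i + e_ F j)%R <= U)%MS].
have HR j : j \in T -> exists i, R j i.
  move=> jT; have [z zU zT] := ex_unitT rU E jT.
  have z0 : z != 0.
    by apply/eqP => z0; move: (zT j jT); rewrite z0 mxE eqxx => /eqP; rewrite eq_sym oner_eq0.
  have sz1 : supp z :&: T = [set j].
    apply/setP => t; rewrite !inE; case tT: (t \in T); last first.
      by rewrite andbF; apply/esym/negbTE; apply: contraFneq tT => ->.
    by rewrite andbT zT //; case: (t == j); rewrite ?oner_eq0 ?eqxx.
  have : ~~ (pt_of z \in Y_T T vs).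
    by apply/negP => Yz; apply: (Hnot (pt_of z)); [rewrite !in_setU Yz orbT | rewrite pt_sub].
  rewrite inY // sz1 cards1 eqxx /= negbK => /exclE [v [j' [l [vv j'T l0 Ez]]]].
  have [d dz] := pt_eq_scale Ez.
  have vj t : t \in T -> v 0 t = 0.
    move=> tT; move: (dvs v vv); rewrite disjoint_sym => /disjointFr /(_ tT).
    by rewrite inE => /negbFE /eqP.
  have := zT j jT; rewrite dz !mxE vj // add0r !eqxx /=.
  case: (j =P j') => [Ej | ne]; last by rewrite mulr0 mulr0 => /eqP; rewrite eq_sym oner_eq0.
  rewrite -Ej in dz.
  rewrite mulr1 => dl.
  have iv : (index v vs < size vs)%N by rewrite index_mem.
  exists (Ordinal iv); apply/existsP; exists d.
  rewrite /= nth_index //; apply/andP; split.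
    by apply: contra_eqN dl => /eqP ->; rewrite mul0r eq_sym oner_eq0.
  by move: zU; rewrite dz scalerDr scalerA dl scale1r.
have [j [j' [i [jT j'T ne Rj Rj']]]] := pigeon HR sz.
case/existsP: Rj => c /andP [c0 cU].
case/existsP: Rj' => c' /andP [c'0 c'U].
set v := nth 0 vs i in cU c'U.
pose w := c' *: (c *: v + e_ F j) + (- c) *: (c' *: v + e_ F j').
have wU : (w <= U)%MS by rewrite addmx_sub // scalemx_sub.
have wE t : w 0 t = c' * (t == j)%:R - c * (t == j')%:R.
  rewrite !mxE eqxx /=; ring.
have sw : supp w = [set j; j'].
  apply/setP => t; rewrite !inE wE.
  have [->|ntj] := eqVneq t j; first by rewrite (negbTE ne) /= mulr1 mulr0 subr0 c'0.
  have [_|ntj'] := eqVneq t j'; first by rewrite /= mulr1 mulr0 sub0r oppr_eq0 c0.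
  by rewrite /= !mulr0 subrr eqxx.
have w0 : w != 0.
  by apply/eqP => w0; move: (setU11 j [set j']); rewrite -sw w0 inE mxE eqxx.
apply: (Hnot (pt_of w)); last by rewrite pt_sub.
rewrite !in_setU inZ // sw cards2 ne eqxx andbT; apply/orP; right.
by apply/subsetP => t; rewrite !inE => /orP [] /eqP ->.
Qed.

End Block.

Section Tang.
Variables (F : finFieldType) (k : nat).
Implicit Types (v w : 'rV[F]_k) (T D : {set 'I_k}).

Definition Am D (R : 'I_k -> 'rV[F]_k) : 'M[F]_k :=
  <<\matrix_(l < #|D|) R (enum_val l)>>%MS.

Variables (D : {set 'I_k}) (R : 'I_k -> 'rV[F]_k).
Hypothesis HR : forall i j, i \in D -> j \in D -> R i 0 j = (i == j)%:R.

Lemma Am_rank : \rank (Am D R) = #|D|.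
Proof.
rewrite /Am mxrank_gen; apply/eqP; rewrite eqn_leq rank_leq_row /=.
set A := \matrix_(l < #|D|) R (enum_val l).
have E : A *m Cm F D = 1%:M.
  apply/matrixP => l l'; rewrite mxE.
  under eq_bigr => i _ do rewrite !mxE.
  rewrite sum_delta mxE HR ?enum_valP //.
  by rewrite (inj_eq enum_val_inj).
by rewrite -{1}(mxrank1 F #|D|) -E mxrankM_maxl.
Qed.

Lemma Am_sub i : i \in D -> (R i <= Am D R)%MS.
Proof.
move=> iD; rewrite /Am genmxE.
by rewrite -(enum_rankK_in iD iD) -(rowK (fun l => R (enum_val l))) row_sub.
Qed.

Lemma Am_mem w : (w <= Am D R)%MS -> w = \sum_(i in D) w 0 i *: R i.
Proof.
rewrite /Am genmxE => /submxP [u wE].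
rewrite big_enum_val {1}wE mulmx_sum_row; apply: eq_bigr => l _.
rewrite rowK; congr (_ *: _).
rewrite wE mxE; under eq_bigr => i _ do rewrite mxE HR ?enum_valP // (inj_eq enum_val_inj).
by rewrite sum_delta.
Qed.

End Tang.

Section Graph.
Variables (F : finFieldType) (k : nat).
Implicit Types (v w : 'rV[F]_k) (T D : {set 'I_k}).

Lemma sum_supp T w (X : 'I_k -> 'rV[F]_k) :
  \sum_(i in T) w 0 i *: X i = \sum_(i in supp w :&: T) w 0 i *: X i.
Proof.
rewrite big_mkcond [RHS]big_mkcond; apply: eq_bigr => i _; rewrite !inE.
case: (i \in T); rewrite ?andbF ?andbT //.
by case: (boolP (w 0 i != 0)) => // /negPn /eqP ->; rewrite scale0r.
Qed.

Lemma sum_suppF T w (x : 'I_k -> F) :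
  \sum_(i in T) w 0 i * x i = \sum_(i in supp w :&: T) w 0 i * x i.
Proof.
rewrite big_mkcond [RHS]big_mkcond; apply: eq_bigr => i _; rewrite !inE.
case: (i \in T); rewrite ?andbF ?andbT //.
by case: (boolP (w 0 i != 0)) => // /negPn /eqP ->; rewrite mul0r.
Qed.

Lemma sum_set2 (V : nmodType) (p q : 'I_k) (f : 'I_k -> V) : p != q ->
  \sum_(i in [set p; q]) f i = f p + f q.
Proof. by move=> pq; rewrite big_setU1 ?big_set1 // inE. Qed.

Lemma supp0 w i : i \notin supp w -> w 0 i = 0.
Proof. by rewrite inE negbK => /eqP. Qed.

Lemma suppN0 w i : i \in supp w -> w 0 i != 0.
Proof. by rewrite inE. Qed.

Lemma w_pair w p q : p != q -> supp w = [set p; q] ->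
  w = w 0 p *: e_ F p + w 0 q *: e_ F q.
Proof.
move=> pq sw; apply/rowP => j; rewrite !mxE !eqxx /=.
have [->|njp] := eqVneq j p; first by rewrite (negbTE pq) /=; ring.
have [->|njq] := eqVneq j q; first by rewrite /=; ring.
rewrite /= !mulr0 addr0; apply: supp0; rewrite sw !inE negb_or njp njq //.
Qed.

Variables (T : {set 'I_k}) (G : 'I_k -> 'rV[F]_k).
Hypothesis GT : forall i j, i \in T -> j \in T -> G i 0 j = 0.

Definition Rg i := G i + e_ F i.

Lemma Rg_HR i j : i \in T -> j \in T -> Rg i 0 j = (i == j)%:R.
Proof. by move=> iT jT; rewrite !mxE GT // add0r eqxx eq_sym. Qed.

Variable w : 'rV[F]_k.
Hypothesis wU : (w <= Am T Rg)%MS.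

Lemma gw : w = \sum_(i in supp w :&: T) w 0 i *: Rg i.
Proof. by rewrite -sum_supp; apply: Am_mem wU; apply: Rg_HR. Qed.

Lemma g_noX : w != 0 -> ~~ [disjoint supp w & T].
Proof.
move=> w0; apply: contra w0 => dw; rewrite -setI_eq0 in dw.
by rewrite gw (eqP dw) big_set0.
Qed.

Lemma g_one t : supp w :&: T = [set t] -> w = w 0 t *: Rg t.
Proof. by move=> st; rewrite {1}gw st big_set1. Qed.

Lemma g_two p q : p != q -> supp w \subset T -> supp w = [set p; q] ->
  w 0 p *: G p + w 0 q *: G q = 0.
Proof.
move=> pq sT sw.
have := gw; rewrite (setIidPl sT) sw sum_set2 // /Rg !scalerDr addrACA => H.
apply: (@addIr _ (w 0 p *: e_ F p + w 0 q *: e_ F q)); rewrite add0r.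
rewrite -[in RHS](w_pair pq sw); exact: esym H.
Qed.

End Graph.

Section VS.
Variables (F : finFieldType) (k : nat).
Implicit Types (v w : 'rV[F]_k) (T D : {set 'I_k}).
Variables (T : {set 'I_k}) (vs : seq 'rV[F]_k).
Hypothesis vs0 : forall v, v \in vs -> v != 0.
Hypothesis vsu : uniq (map (@pt_of F k) vs).
Hypothesis vsT : forall v, v \in vs -> [disjoint supp v & T].

Lemma nth_vsT n j : j \in T -> (nth 0 vs n) 0 j = 0.
Proof.
move=> jT; case: (ltnP n (size vs)) => [lt | ge]; last by rewrite nth_default ?mxE.
move: (vsT (mem_nth 0 lt)); rewrite disjoint_sym => /disjointFr /(_ jT).
by rewrite inE => /negbFE /eqP.
Qed.

Lemma vs_indep a b x y : (a < size vs)%N -> (b < size vs)%N -> a != b -> x != 0 ->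
  x *: nth 0 vs a + y *: nth 0 vs b = 0 -> False.
Proof.
move=> la lb ab x0 /eqP; rewrite addr_eq0 => /eqP E.
have HA : nth 0 vs a = (- (x^-1 * y)) *: nth 0 vs b.
  by rewrite -[LHS]scale1r -(mulVf x0) -scalerA E scalerN scalerA -scaleNr.
have [y0|y0] := eqVneq y 0.
  by move: HA; rewrite y0 mulr0 oppr0 scale0r => /eqP; apply/negP; apply: vs0; rewrite mem_nth.
have c0 : - (x^-1 * y) != 0 by rewrite oppr_eq0 mulf_neq0 ?invr_eq0.
have := pt_scale (nth 0 vs b) c0; rewrite -HA => Ep.
move: vsu => /nth_uniq; rewrite size_map => /(_ (pt_of 0) a b la lb).
by rewrite !(nth_map 0) // Ep eqxx (negbTE ab).
Qed.

Lemma idx_lt (S : {set 'I_k}) i : #|S| = size vs -> i \in S ->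
  (index i (enum S) < size vs)%N.
Proof. by move=> <- iS; rewrite cardE index_mem mem_enum. Qed.

Lemma idx_inj (S : {set 'I_k}) i j : i \in S -> j \in S ->
  index i (enum S) = index j (enum S) -> i = j.
Proof. by move=> iS jS E; apply: (index_inj i _ _ E); rewrite mem_enum. Qed.

End VS.

Lemma solve_lin (F : fieldType) (V : lmodType F) (A B : V) (x y : F) : x != 0 ->
  x *: A + y *: B = 0 -> A = (- (x^-1 * y)) *: B.
Proof.
move=> x0 /eqP; rewrite addr_eq0 => /eqP E.
by rewrite -[LHS]scale1r -(mulVf x0) -scalerA E scalerN scalerA -scaleNr.
Qed.

Section TY.
Variables (F : finFieldType) (k : nat).
Implicit Types (v w : 'rV[F]_k) (D : {set 'I_k}).
Variables (T : {set 'I_k}) (vs : seq 'rV[F]_k).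
Hypothesis vs0 : forall v, v \in vs -> v != 0.
Hypothesis vsu : uniq (map (@pt_of F k) vs).
Hypothesis vsT : forall v, v \in vs -> [disjoint supp v & T].
Hypothesis Hsz : size vs = (#|T| - 1)%N.

Local Notation M := (X_T F T :|: Y_T T vs :|: Z_T F T).

Lemma tangY y j0 : y != 0 -> supp y :&: T = [set j0] -> ~~ excl T vs (pt_of y) ->
  exists U : 'M[F]_k, \rank U = #|T| /\ pts_in U :&: M = [set pt_of y].
Proof.
move=> y0 sy nex.
have : j0 \in supp y :&: T by rewrite sy set11.
rewrite inE => /andP [yj0 j0T]; rewrite inE in yj0.
have yT j : j \in T -> j != j0 -> y 0 j = 0.
  move=> jT ne; apply: supp0; apply: contra ne => js.
  by rewrite -in_set1 -sy inE js jT.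
set S := T :\ j0.
have cS : #|S| = size vs by rewrite Hsz (cardsD1 j0 T) j0T addKn.
pose G i := if i == j0 then (y 0 j0)^-1 *: y - e_ F j0 else nth 0 vs (index i (enum S)).
have GT i j : i \in T -> j \in T -> G i 0 j = 0.
  move=> iT jT; rewrite /G; case: eqP => [_|_]; last exact: (nth_vsT vsT).
  rewrite !mxE eqxx /=; have [->|ne] := eqVneq j j0; first by rewrite mulVf // subrr.
  by rewrite (yT j) // mulr0 subrr.
pose U := Am T (Rg G).
exists U; split; first by apply: Am_rank; apply: Rg_HR.
have Rj0 : Rg G j0 = (y 0 j0)^-1 *: y by rewrite /Rg /G eqxx subrK.
have Rsel i : i != j0 -> Rg G i = nth 0 vs (index i (enum S)) + 1 *: e_ F i.
  by move=> ij; rewrite /Rg /G (negbTE ij) scale1r.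
have idxS i : i \in T -> i != j0 -> (index i (enum S) < size vs)%N.
  by move=> iT ij; apply: idx_lt cS _; rewrite !inE ij.
apply/eqP; rewrite eqEsubset; apply/andP; split; last first.
  rewrite sub1set inE /pts_in inE inPG //= pt_sub; apply/andP; split.
    have : (y 0 j0 *: Rg G j0 <= U)%MS by apply: scalemx_sub; apply: Am_sub.
    by rewrite Rj0 scalerA mulfV // scale1r.
  by rewrite !in_setU inY // sy cards1 eqxx nex orbT.
apply/subsetP => P; rewrite /pts_in in_setI inE => /andP [/andP [PPG PU] PM].
have [w w0 Pw] := PGP PPG; subst P; rewrite pt_sub in PU.
rewrite !in_setU in PM; case/orP: PM => [/orP [PX|PY]|PZ].
- by rewrite inX // in PX; have := g_noX GT PU w0; rewrite PX.
- rewrite inY // in PY; case/andP: PY => /cards1P [t st] nexw.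
  have wt := g_one GT PU st.
  have : t \in supp w :&: T by rewrite st set11.
  rewrite inE => /andP [/suppN0 wt0 tT].
  have [Etj|ntj] := eqVneq t j0.
    rewrite inE; apply/eqP; rewrite wt Etj Rj0 scalerA pt_scale //.
    by rewrite mulf_neq0 ?invr_eq0 // -Etj.
  exfalso; move/negP: nexw; apply.
  rewrite wt Rsel // pt_scale //; apply: exclI => //; first by rewrite mem_nth // idxS.
  exact: oner_neq0.
- rewrite inZ // in PZ; case/andP: PZ => sT /cards2P [p [q [pq sw]]].
  have H := g_two GT PU pq sT sw.
  have inS a : a \in [set p; q] -> a \in T /\ w 0 a != 0.
    by rewrite -sw => aw; split; [apply: (subsetP sT) | apply: suppN0].
  have [pT wp0] := inS p (setU11 _ _).
  have [qT wq0] : q \in T /\ w 0 q != 0 by apply: inS; rewrite !inE eqxx orbT.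
  have key a b : a != b -> a \in T -> b \in T -> w 0 a != 0 -> w 0 b != 0 ->
      w 0 a *: G a + w 0 b *: G b = 0 -> b != j0 -> False.
    move=> ab aT bT a0 b0 Hab bj.
    have Gb : G b = nth 0 vs (index b (enum S)) by rewrite /G (negbTE bj).
    rewrite Gb in Hab.
    have [Eaj|aj] := eqVneq a j0.
      rewrite Eaj in a0 Hab.
      have := solve_lin a0 Hab; rewrite /G eqxx.
      set c := - ((w 0 j0)^-1 * w 0 b) => Hc.
      have c0 : c != 0 by rewrite /c oppr_eq0 mulf_neq0 ?invr_eq0.
      move/negP: nex; apply.
      rewrite -(pt_scale y (invr_neq0 yj0)) -(subrK (e_ F j0) ((y 0 j0)^-1 *: y)) Hc.
      rewrite -[X in _ + X](scale1r (e_ F j0)) -(mulfV c0) -scalerA -scalerDr pt_scale //.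
      by apply: exclI => //; [rewrite mem_nth // idxS | rewrite invr_eq0].
    have Ga : G a = nth 0 vs (index a (enum S)) by rewrite /G (negbTE aj).
    rewrite Ga in Hab.
    apply: (vs_indep vs0 vsu _ _ _ a0 Hab); rewrite ?idxS //.
    by apply: contra ab => /eqP /idx_inj; rewrite !inE aj bj aT bT => /(_ isT isT) ->.
  exfalso; have [Eqj|qj] := eqVneq q j0; last exact: (key p q pq pT qT wp0 wq0 H qj).
  apply: (key q p _ qT pT wq0 wp0); first by rewrite eq_sym.
    by rewrite addrC.
  by rewrite -Eqj.
Qed.

End TY.

Section TZ.
Variables (F : finFieldType) (k : nat).
Implicit Types (v w : 'rV[F]_k) (D : {set 'I_k}).
Variables (T : {set 'I_k}) (vs : seq 'rV[F]_k).
Hypothesis vs0 : forall v, v \in vs -> v != 0.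
Hypothesis vsu : uniq (map (@pt_of F k) vs).
Hypothesis vsT : forall v, v \in vs -> [disjoint supp v & T].
Hypothesis Hsz : size vs = (#|T| - 1)%N.

Local Notation M := (X_T F T :|: Y_T T vs :|: Z_T F T).

Lemma tangZ y p0 q0 : y != 0 -> p0 != q0 -> supp y \subset T -> supp y = [set p0; q0] ->
  exists U : 'M[F]_k, \rank U = #|T| /\ pts_in U :&: M = [set pt_of y].
Proof.
move=> y0 pq0 syT sy.
have p0s : p0 \in supp y by rewrite sy !inE eqxx.
have q0s : q0 \in supp y by rewrite sy !inE eqxx orbT.
have p0T := subsetP syT _ p0s; have q0T := subsetP syT _ q0s.
have yp0 := suppN0 p0s; have yq0 := suppN0 q0s.
set S := T :\ q0.
have cS : #|S| = size vs by rewrite Hsz (cardsD1 q0 T) q0T addKn.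
pose sel i := if i == q0 then p0 else i.
have selS i : i \in T -> sel i \in S.
  by move=> iT; rewrite /sel !inE; case: (eqVneq i q0) => [_|ne]; rewrite ?pq0 ?p0T ?ne ?iT.
pose idx i := index (sel i) (enum S).
have idxlt i : i \in T -> (idx i < size vs)%N by move=> iT; apply: idx_lt cS (selS i iT).
pose c i := if i == p0 then y 0 q0 else if i == q0 then - y 0 p0 else 1.
have c0 i : c i != 0.
  by rewrite /c; case: (i == p0); [|case: (i == q0)]; rewrite ?oppr_eq0 ?oner_eq0.
pose G i := c i *: nth 0 vs (idx i).
have GT i j : i \in T -> j \in T -> G i 0 j = 0.
  by move=> iT jT; rewrite /G mxE (nth_vsT vsT) // mulr0.
pose U := Am T (Rg G).
exists U; split; first by apply: Am_rank; apply: Rg_HR.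
set v0 := nth 0 vs (index p0 (enum S)).
have Rp : Rg G p0 = y 0 q0 *: v0 + e_ F p0 by rewrite /Rg /G /c /idx /sel eqxx (negbTE pq0).
have Rq : Rg G q0 = (- y 0 p0) *: v0 + e_ F q0.
  by rewrite /Rg /G /c /idx /sel eqxx eq_sym (negbTE pq0).
have yU : (y <= U)%MS.
  have : ((y 0 p0 *: Rg G p0 + y 0 q0 *: Rg G q0)%R <= U)%MS.
    by rewrite addmx_sub // scalemx_sub // Am_sub.
  suff -> : y 0 p0 *: Rg G p0 + y 0 q0 *: Rg G q0 = y by [].
  rewrite Rp Rq; apply/rowP => j; rewrite [in RHS](w_pair pq0 sy) !mxE eqxx /=; ring.
apply/eqP; rewrite eqEsubset; apply/andP; split; last first.
  rewrite sub1set inE /pts_in inE inPG //= pt_sub yU /=.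
  by rewrite !in_setU inZ // syT sy cards2 pq0 orbT.
apply/subsetP => P; rewrite /pts_in in_setI inE => /andP [/andP [PPG PU] PM].
have [w w0 Pw] := PGP PPG; subst P; rewrite pt_sub in PU.
rewrite !in_setU in PM; case/orP: PM => [/orP [PX|PY]|PZ].
- by rewrite inX // in PX; have := g_noX GT PU w0; rewrite PX.
- exfalso; rewrite inY // in PY; case/andP: PY => /cards1P [t st] nexw.
  have wt := g_one GT PU st.
  have : t \in supp w :&: T by rewrite st set11.
  rewrite inE => /andP [/suppN0 wt0 tT].
  move/negP: nexw; apply.
  rewrite wt /Rg /G -[X in _ + X](scale1r (e_ F t)) -(mulfV (c0 t)) -scalerA.
  rewrite -scalerDr scalerA pt_scale; last by rewrite mulf_neq0.
  by apply: exclI => //; [rewrite mem_nth // idxlt | rewrite invr_eq0].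
- rewrite inZ // in PZ; case/andP: PZ => sT /cards2P [p [q [pq sw]]].
  have inS a : a \in [set p; q] -> a \in T /\ w 0 a != 0.
    by rewrite -sw => aw; split; [apply: (subsetP sT) | apply: suppN0].
  have [pT wp0] := inS p (setU11 _ _).
  have [qT wq0] : q \in T /\ w 0 q != 0 by apply: inS; rewrite !inE eqxx orbT.
  have [Eidx | nidx] := eqVneq (idx p) (idx q); last first.
    exfalso; have H := g_two GT PU pq sT sw; rewrite /G !scalerA in H.
    by apply: (vs_indep vs0 vsu _ _ nidx _ H); rewrite ?idxlt // mulf_neq0.
  have Esel : sel p = sel q := idx_inj (selS p pT) (selS q qT) Eidx.
  have swy : supp w = supp y.
    rewrite sw sy.
    have [Ep|np] := eqVneq p q0.
      have nq : q != q0 by rewrite -Ep eq_sym.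
      by move: Esel; rewrite /sel Ep eqxx (negbTE nq) => <-; apply: setUC.
    have [Eq|nq] := eqVneq q q0.
      by move: Esel; rewrite /sel Eq eqxx (negbTE np) => ->.
    by move: Esel; rewrite /sel (negbTE np) (negbTE nq) => /eqP; rewrite (negbTE pq).
  have sw2 : supp w = [set p0; q0] by rewrite swy sy.
  have sT2 : supp w \subset T by rewrite swy.
  have wp0' : w 0 p0 != 0 by apply: suppN0; rewrite swy.
  have H := g_two GT PU pq0 sT2 sw2.
  have v0n : v0 != 0 by apply: vs0; rewrite mem_nth // (idx_lt cS) // !inE pq0.
  move: H; rewrite /G /c /idx /sel eqxx (negbTE pq0) eq_sym (negbTE pq0) eqxx -/v0.
  rewrite !scalerA -scalerDl => /eqP; rewrite scaler_eq0 (negbTE v0n) orbF mulrN subr_eq0.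
  move/eqP => r.
  have e : w 0 p0 / y 0 p0 * y 0 q0 = w 0 q0 by rewrite mulrAC r mulfK.
  rewrite inE; apply/eqP.
  have -> : w = (w 0 p0 / y 0 p0) *: y.
    apply/rowP => j; rewrite [RHS]mxE.
    have yj : y 0 j = y 0 p0 * (j == p0)%:R + y 0 q0 * (j == q0)%:R.
      by rewrite {1}(w_pair pq0 sy) !mxE eqxx.
    have wj : w 0 j = w 0 p0 * (j == p0)%:R + w 0 q0 * (j == q0)%:R.
      by rewrite {1}(w_pair pq0 sw2) !mxE eqxx.
    by rewrite yj wj mulrDr !mulrA mulfVK // e.
  by rewrite pt_scale // mulf_neq0 // invr_eq0.
Qed.

End TZ.

Section ExG.
Variables (F : finFieldType) (k : nat).

Lemma exG (T E : {set 'I_k}) : (#|T| <= #|F| ^ #|E|)%N ->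
  exists G : 'I_k -> 'rV[F]_k,
    (forall i j, j \notin E -> G i 0 j = 0) /\ {in T &, injective G}.
Proof.
move=> cT.
pose W := pffun_on (0 : F) E predT.
have cW : #|W| = (#|F| ^ #|E|)%N.
  by rewrite card_pffun_on; congr (_ ^ _)%N; apply: eq_card.
pose lst := enum W.
pose f i := nth [ffun=> 0] lst (index i (enum T)).
have flt i : i \in T -> (index i (enum T) < size lst)%N.
  move=> iT; rewrite -cardE cW; apply: leq_trans cT.
  by rewrite cardE index_mem mem_enum.
exists (fun i => \row_j f i j); split.
  move=> i j jE; rewrite mxE.
  case: (ltnP (index i (enum T)) (size lst)) => [lt|ge]; last first.
    by rewrite /f nth_default // ffunE.
  have : f i \in W by rewrite -mem_enum mem_nth.
  case/pffun_onP => /subsetP sup _.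
  by apply/eqP; apply: contraNT jE => nz; apply: sup; rewrite inE.
move=> p q pT qT /rowP Epq.
have Ef : f p = f q by apply/ffunP => j; move: (Epq j); rewrite !mxE.
move: Ef; rewrite /f => /eqP; rewrite nth_uniq ?flt ?enum_uniq // => /eqP.
by move/(index_inj p); apply; rewrite mem_enum.
Qed.

End ExG.

Section TX.
Variables (F : finFieldType) (k : nat).
Variables (T : {set 'I_k}) (vs : seq 'rV[F]_k).
Local Notation M := (X_T F T :|: Y_T T vs :|: Z_T F T).

Lemma tangX y s l0 (G : 'I_k -> 'rV[F]_k) : y != 0 -> [disjoint supp y & T] ->
  y 0 s != 0 -> l0 \in T ->
  (forall i j, j \in s |: T -> G i 0 j = 0) -> {in T &, injective G} ->
  exists U : 'M[F]_k, \rank U = #|T| /\ pts_in U :&: M = [set pt_of y].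
Proof.
move=> y0 dy ys0 l0T GE Ginj.
have yT j : j \in T -> y 0 j = 0.
  move=> jT; apply: supp0; move: dy; rewrite disjoint_sym => /disjointFr /(_ jT) ->.
  by [].
have sT : s \notin T by apply: contra ys0 => sT; rewrite yT.
have GT i j : j \in T -> G i 0 j = 0 by move=> jT; apply: GE; rewrite !inE jT orbT.
have Gs i : G i 0 s = 0 by apply: GE; rewrite !inE eqxx.
pose a := (y 0 s)^-1 *: y.
pose D := s |: (T :\ l0).
pose R i := if i == s then a else (G i + e_ F i) - (G l0 + e_ F l0).
have inD i : i \in D -> i != s -> i \in T /\ i != l0.
  by rewrite !inE => /orP [/eqP -> | /andP [il iT]]; [rewrite eqxx | ].
have HR i j : i \in D -> j \in D -> R i 0 j = (i == j)%:R.
  move=> iD jD; rewrite /R.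
  have [-> | ni] := eqVneq i s.
    rewrite /a mxE; have [<- | nj] := eqVneq s j; first by rewrite mulVf.
    have njs : j != s by rewrite eq_sym.
    have [jT _] := inD j jD njs.
    by rewrite (yT j) // mulr0.
  have [iT il] := inD i iD ni.
  rewrite !mxE !eqxx /=; have [<- | nj] := eqVneq s j.
    have sl0 : (s == l0) = false by apply: contraNF sT => /eqP ->.
    by rewrite !Gs eq_sym (negbTE ni) sl0 /=; ring.
  have njs : j != s by rewrite eq_sym.
  have [jT jl] := inD j jD njs.
  by rewrite !GT // (negbTE jl) eq_sym /=; ring.
have sD : s \notin T :\ l0 by rewrite !inE negb_and sT orbT.
have cD : #|D| = #|T|.
  by rewrite /D cardsU1 sD [in RHS](cardsD1 l0 T) l0T.
pose U := Am D R.
exists U; split; first by rewrite Am_rank // cD.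
have Ra : R s = a by rewrite /R eqxx.
have aU : (a <= U)%MS by rewrite -Ra Am_sub // /D setU11.
apply/eqP; rewrite eqEsubset; apply/andP; split; last first.
  rewrite sub1set inE /pts_in inE inPG //= pt_sub; apply/andP; split.
    by have := scalemx_sub (y 0 s) aU; rewrite /a scalerA mulfV // scale1r.
  by rewrite !in_setU inX // dy.
apply/subsetP => P; rewrite /pts_in in_setI inE => /andP [/andP [PPG PU] PM].
have [w w0 Pw] := PGP PPG; subst P; rewrite pt_sub in PU.
have wE := Am_mem HR PU.
have wEs : w = w 0 s *: a + \sum_(i in T :\ l0) w 0 i *: R i.
  by rewrite {1}wE /D big_setU1 //= Ra.
have RiT i j : i \in T :\ l0 -> R i 0 j = G i 0 j + (j == i)%:R - (G l0 0 j + (j == l0)%:R).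
  move=> iTl; have ni : i != s by apply: contraNneq sD => <-.
  by rewrite /R (negbTE ni) !mxE !eqxx.
have coord j : w 0 j = w 0 s * a 0 j + \sum_(i in T :\ l0) w 0 i * R i 0 j.
  rewrite {1}wEs !mxE summxE; congr (_ + _); apply: eq_bigr => i _; rewrite mxE //.
have wl0 : w 0 l0 = - \sum_(i in T :\ l0) w 0 i.
  rewrite coord /a mxE (yT l0) // mulr0 mulr0 add0r -sumrN; apply: eq_bigr => i iTl.
  move: (iTl); rewrite !inE => /andP [il iT].
  by rewrite RiT // !GT // eq_sym (negbTE il) eqxx /=; ring.
have sumT : \sum_(i in T) w 0 i * 1 = 0.
  rewrite (big_setD1 l0) //= wl0 mulr1; under eq_bigr => i _ do rewrite mulr1.
  by rewrite addNr.
have coordE j : j != s -> j \notin T ->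
    w 0 j = w 0 s * a 0 j + \sum_(i in T) w 0 i * G i 0 j.
  move=> js jT; rewrite coord; congr (_ + _).
  rewrite [in RHS](big_setD1 l0) //= wl0.
  have -> : \sum_(i in T :\ l0) w 0 i * R i 0 j =
      \sum_(i in T :\ l0) w 0 i * G i 0 j - (\sum_(i in T :\ l0) w 0 i) * G l0 0 j.
    rewrite mulr_suml -sumrB; apply: eq_bigr => i iTl.
    have ji : (j == i) = false by apply: contraNF jT => /eqP ->; move: iTl; rewrite !inE => /andP [].
    have jl : (j == l0) = false by apply: contraNF jT => /eqP ->.
    by rewrite RiT // ji jl /=; ring.
  by rewrite mulNr addrC.
rewrite !in_setU in PM; case/orP: PM => [/orP [PX|PY]|PZ].
- rewrite inX // in PX.
  have wT i : i \in T -> w 0 i = 0.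
    by move=> iT; apply: supp0; move: PX; rewrite disjoint_sym => /disjointFr /(_ iT) ->.
  have wa : w = w 0 s *: a.
    by rewrite {1}wEs big1 ?addr0 // => i; rewrite !inE => /andP [_ iT]; rewrite wT // scale0r.
  have ws0 : w 0 s != 0 by apply: contraNneq w0 => ws; rewrite wa ws scale0r.
  by rewrite inE wa /a scalerA pt_scale // mulf_neq0 // invr_eq0.
- exfalso; rewrite inY // in PY; case/andP: PY => /cards1P [t st] _.
  have : t \in supp w :&: T by rewrite st set11.
  rewrite inE => /andP [/suppN0 wt0 tT].
  by move: sumT; rewrite sum_suppF st big_set1 mulr1 => /eqP; rewrite (negbTE wt0).
- exfalso; rewrite inZ // in PZ; case/andP: PZ => sT' /cards2P [p [q [pq sw]]].
  have pT : p \in T by apply: (subsetP sT'); rewrite sw !inE eqxx.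
  have qT : q \in T by apply: (subsetP sT'); rewrite sw !inE eqxx orbT.
  have wp0 : w 0 p != 0 by apply: suppN0; rewrite sw !inE eqxx.
  have wpq : w 0 q = - w 0 p.
    move: sumT; rewrite sum_suppF (setIidPl sT') sw sum_set2 // !mulr1.
    by move/eqP; rewrite addrC addr_eq0 => /eqP.
  have ws : w 0 s = 0 by apply: supp0; apply: contra sT => /(subsetP sT').
  move/negP: (pq); apply; apply/eqP; apply: Ginj => //.
  apply/rowP => j.
  case: (boolP (j \in s |: T)) => jsT; first by rewrite !GE.
  move: (jsT); rewrite !inE negb_or => /andP [js jT].
  have wj : w 0 j = 0 by apply: supp0; apply: contra jT => /(subsetP sT').
  have := coordE j js jT.
  rewrite wj ws mul0r add0r sum_suppF (setIidPl sT') sw sum_set2 // wpq.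
  move/eqP; rewrite eq_sym mulNr -mulrBr mulf_eq0 (negbTE wp0) subr_eq0 => /eqP.
  by [].
Qed.

End TX.

Theorem mainTheorem17 (F : finFieldType) (k m : nat) (T : {set 'I_k})
  (vs : seq 'rV[F]_k) :
  (1 <= m)%N -> (m <= k - 1)%N -> #|T| = m ->
  size vs = (m - 1)%N ->
  (forall v, v \in vs -> v != 0) ->
  uniq (map (@pt_of F k) vs) ->
  (forall v, v \in vs -> [disjoint supp v & T]) ->
  (m <= #|F| ^ (k - m - 1))%N ->
  is_minimal_block (k - m) (X_T F T :|: Y_T T vs :|: Z_T F T).
Proof.
move=> m1 mk cT Hsz vs0 vsu vsT Hq.
have mk' : (m <= k)%N by apply: leq_trans mk (leq_subr _ _).
have rk : (k - (k - m))%N = #|T| by rewrite subKn // cT.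
have Hsz' : size vs = (#|T| - 1)%N by rewrite cT.
split; [|split].
- apply/subsetP => P; rewrite !in_setU => /orP [/orP [PX|PY]|PZ].
  + by case/imsetP: PX => v /andP [v0 _] ->; apply: inPG.
  + by move: PY; rewrite /Y_T in_setD => /andP [_ /imsetP [v /andP [v0 _] ->]]; apply: inPG.
  + by case/imsetP: PZ => v /andP [/andP [v0 _] _] ->; apply: inPG.
- move=> U; rewrite rk => rU; apply: blockM => //.
  by rewrite Hsz cT subn1 prednK.
- move=> x; rewrite !in_setU => /orP [/orP [xX|xY]|xZ].
  + case/imsetP: (xX) => y /andP [y0 dy] ->.
    have [s ys] : exists s, y 0 s != 0.
      case: (boolP [exists s, y 0 s != 0]) => [/existsP //|].
      rewrite negb_exists => /forallP ny; case/eqP: y0; apply/rowP => j.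
      by move: (ny j); rewrite negbK mxE => /eqP.
    have sT : s \notin T.
      by apply: contra ys => sT; apply/eqP; apply: supp0; move: dy; rewrite disjoint_sym => /disjointFr ->.
    have [l0 l0T] : exists l0, l0 \in T.
      by apply/set0Pn; rewrite -card_gt0 cT.
    have cE : #|~: (s |: T)| = (k - m - 1)%N.
      have h := cardsC (s |: T); rewrite cardsU1 sT cT card_ord /= in h.
      move: h; set c := #|~: (s |: T)|; move=> h; lia.
    have hq : (#|T| <= #|F| ^ #|~: (s |: T)|)%N by rewrite cE cT.
    have [G [GE Ginj]] := exG hq.
    have GE' i j : j \in s |: T -> G i 0 j = 0 by move=> jA; apply: GE; rewrite inE negbK.
    have [U [rU HU]] := tangX vs y0 dy ys l0T GE' Ginj.
    by exists U; split; rewrite ?rk.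
  + move: (xY); rewrite /Y_T in_setD => /andP [_ /imsetP [y /andP [y0 /cards1P [j0 sy]] Ex]].
    move: xY; rewrite Ex inY // sy cards1 /= => nex.
    have [U [rU HU]] := tangY vs0 vsu vsT Hsz' y0 sy nex.
    by exists U; split; rewrite ?rk.
  + case/imsetP: (xZ) => y /andP [/andP [y0 syT] /cards2P [p0 [q0 [pq sy]]]] ->.
    have [U [rU HU]] := tangZ vs0 vsu vsT Hsz' y0 pq syT sy.
    by exists U; split; rewrite ?rk.
Qed.
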